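(* Let $n\ge1$, $q$ a prime power, $\mathcal{F}$ a covering of $[n]$ with no redundant basic set, and $\phi$ a permutation of $[n]$ that preserves $\mathcal{F}$. Then the map $T_\phi:\mathbb{F}_q^n\to\mathbb{F}_q^n$, $T_\phi(x_1,\dots,x_n)=(x_{\phi(1)},\dots,x_{\phi(n)})$, is a linear isometry of $(\mathbb{F}_q^n,d_{\mathcal{F}})$.
   Context: For a covering $\mathcal{F}$ of $[n]$ (a family of subsets, called basic sets, whose union is $[n]$) and $x\in\mathbb{F}_q^n$, $\mathrm{wt}_{\mathcal{F}}(x)=\min\{|\mathcal{A}|:\mathcal{A}\subset\mathcal{F},\ \mathrm{supp}(x)\subset\bigcup_{A\in\mathcal{A}}A\}$ where $\mathrm{supp}(x)=\{i:x_i\ne0\}$, and $d_{\mathcal{F}}(x,y)=\mathrm{wt}_{\mathcal{F}}(x-y)$. A basic set is redundant if it is properly contained in another basic set. A permutation $\phi$ of $[n]$ preserves $\mathcal{F}$ if $\phi(A)\in\mathcal{F}$ for every $A\in\mathcal{F}$. *)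

(* Defs.v *)
From HB Require Import structures.
From mathcomp Require Import all_boot all_order all_algebra all_fingroup all_field.
Set Implicit Arguments. Unset Strict Implicit. Unset Printing Implicit Defensive.
Import GRing.Theory.
Local Open Scope ring_scope.

Definition is_covering (n : nat) (fam : {set {set 'I_n}}) : Prop :=
  cover fam = [set: 'I_n].

Definition no_redundant (n : nat) (fam : {set {set 'I_n}}) : Prop :=
  forall A B, A \in fam -> B \in fam -> ~~ (A \proper B).

Definition preserves (n : nat) (phi : {perm 'I_n}) (fam : {set {set 'I_n}}) : Prop :=
  forall A, A \in fam -> phi @: A \in fam.

Definition supp (F : fieldType) (n : nat) (x : 'rV[F]_n) : {set 'I_n} :=
  [set i | x 0 i != 0].

(* wt_F(x) = min{|A| : A subset of fam, supp x subset of union of A}.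
   For a covering, fam itself is admissible, so the default #|fam| of the
   minimum is never smaller than the true minimum. *)
Definition cwt (F : fieldType) (n : nat) (fam : {set {set 'I_n}}) (x : 'rV[F]_n) : nat :=
  \big[minn/#|fam|]_(S : {set {set 'I_n}} | (S \subset fam) && (supp x \subset cover S)) #|S|.

Definition cdist (F : fieldType) (n : nat) (fam : {set {set 'I_n}}) (x y : 'rV[F]_n) : nat :=
  cwt fam (x - y).

Definition Tperm (F : fieldType) (n : nat) (phi : {perm 'I_n}) (x : 'rV[F]_n) : 'rV[F]_n :=
  \row_(i < n) x 0 (phi i).

(* Main.v *)
Require Import Defs.
From HB Require Import structures.
From mathcomp Require Import all_boot all_order all_algebra all_fingroup all_field.
Import GRing.Theory.
Local Open Scope ring_scope.

Definition mw {n : nat} (fam : {set {set 'I_n}}) (s : {set 'I_n}) : nat :=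
  \big[minn/#|fam|]_(S : {set {set 'I_n}} | (S \subset fam) && (s \subset cover S)) #|S|.

Lemma bigmin_le (I : eqType) (r : seq I) (P : pred I) (F : I -> nat) x j :
  j \in r -> P j -> (\big[minn/x]_(i <- r | P i) F i <= F j)%N.
Proof.
move=> + Pj; elim: r => // a r IH; rewrite inE big_cons => /orP[/eqP<-|/IH h].
  by rewrite Pj geq_minl.
by case: (P a) => //; rewrite geq_min h orbT.
Qed.

Lemma mw_mono {n : nat} (fam : {set {set 'I_n}}) (g : {perm 'I_n}) (s : {set 'I_n}) :
  (forall A, A \in fam -> g @: A \in fam) -> (mw fam (g @: s) <= mw fam s)%N.
Proof.
move=> pg; rewrite /mw.
set m' := \big[minn/#|fam|]_(S | _) _.
apply: (big_ind (fun v => m' <= v)%N).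
- rewrite /m'; apply: (big_ind (fun v => v <= #|fam|)%N) => [//|a b ha _|S /andP[h _]].
  by rewrite geq_min ha.
  exact: subset_leq_card.
- by move=> a b ha hb; rewrite leq_min ha hb.
move=> S /andP[sSf scov].
pose S' := (fun A : {set 'I_n} => g @: A) @: S.
have h1 : S' \subset fam.
  by apply/subsetP=> B /imsetP[A AS ->]; apply: pg; apply: (subsetP sSf).
have h2 : g @: s \subset cover S'.
  apply/subsetP=> x /imsetP[y ys ->].
  have := subsetP scov y ys; case/bigcupP=> A AS yA.
  apply/bigcupP; exists (g @: A); first by apply/imsetP; exists A.
  by apply/imsetP; exists y.
apply: (@leq_trans #|S'|); last exact: leq_imset_card.
by rewrite /m'; apply: bigmin_le; rewrite ?mem_index_enum ?h1 ?h2.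
Qed.

Lemma pres_inv {n : nat} (fam : {set {set 'I_n}}) (g : {perm 'I_n}) :
  (forall A, A \in fam -> g @: A \in fam) ->
  (forall A, A \in fam -> (g^-1)%g @: A \in fam).
Proof.
move=> pg B Bf.
have inj : injective (fun A : {set 'I_n} => g @: A) by apply: imset_inj; apply: perm_inj.
pose f := (fun A : {set 'I_n} => g @: A).
have sub : f @: fam \subset fam.
  by apply/subsetP=> C /imsetP[A Af ->]; exact: pg.
have eq : f @: fam = fam.
  by apply/eqP; rewrite eqEcard sub (card_imset _ inj) leqnn.
move: Bf; rewrite -{1}eq => /imsetP[A Af ->].
rewrite -imset_comp (eq_imset _ (fun x => permK g x)) imset_id //.
Qed.

Theorem proposition5 (F : finFieldType) (n : nat) (fam : {set {set 'I_n}})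
    (phi : {perm 'I_n}) :
  (0 < n)%N -> is_covering fam -> no_redundant fam -> preserves phi fam ->
  [/\ linear (Tperm (F:=F) phi), bijective (Tperm (F:=F) phi) &
      forall x y : 'rV[F]_n,
        cdist fam (Tperm phi x) (Tperm phi y) = cdist fam x y].
Proof.
move=> _ _ _ pr.
have lin : linear (Tperm (F:=F) phi).
  by move=> a u v; apply/rowP=> i; rewrite !mxE.
split=> //.
  exists (Tperm (F:=F) (phi^-1)%g) => x; apply/rowP=> i; rewrite !mxE.
    by rewrite permKV.
  by rewrite permK.
move=> x y; rewrite /cdist.
have -> : Tperm phi x - Tperm phi y = Tperm phi (x - y).
  by apply/rowP=> i; rewrite !mxE.
set z := x - y.
have hs : supp (Tperm phi z) = (phi^-1)%g @: supp z.
  apply/setP=> i; rewrite /supp inE mxE.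
  apply/idP/imsetP.
    by move=> h; exists (phi i); rewrite ?inE ?permK.
  by move=> [j]; rewrite inE => h ->; rewrite permKV.
have hs2 : supp z = phi @: supp (Tperm phi z).
  by rewrite hs -imset_comp (eq_imset _ (fun x => permKV phi x)) imset_id.
rewrite /cwt -/(mw fam (supp (Tperm phi z))) -/(mw fam (supp z)).
apply/eqP; rewrite eqn_leq; apply/andP; split.
  by rewrite hs; apply: mw_mono; apply: pres_inv.
by rewrite [in X in (X <= _)%N]hs2; apply: mw_mono.
Qed.
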